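(* For every finite nonempty poset $P$, $h(P)-1\le e(P)\le d(P)$. Moreover, if $P$ has a smallest and a largest element, then $e(P)=d(P)$.
   Context: An injective map $f$ from a poset $P$ to a poset $Q$ is a weak embedding if $p\le q$ implies $f(p)\le f(q)$. $B_n$ is the Boolean lattice of all subsets of $\{1,\dots,n\}$ ordered by inclusion; its $k$-th level is the family of $k$-element subsets. $d(P)$ is the smallest integer $d$ such that $P$ weakly embeds into $B_d$. $e(P)$ is the largest integer $e$ such that for every $n$ the union of any $e$ consecutive levels of $B_n$ admits no weak embedding of $P$. $h(P)$ is the number of elements of a longest chain of $P$. *)

(* Defs.v *)
From mathcomp Require Import all_boot all_order.
Set Implicit Arguments. Unset Strict Implicit. Unset Printing Implicit Defensive.
Import Order.TTheory.
Local Open Scope order_scope.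

Section Defs.
Context {disp : Order.disp_t} (P : finPOrderType disp).

Definition weak_embedding_B (n : nat) (f : P -> {set 'I_n}) : Prop :=
  injective f /\ (forall p q : P, p <= q -> f p \subset f q).

Definition weakly_embeds_into (n : nat) (S : {set {set 'I_n}}) : Prop :=
  exists f : P -> {set 'I_n}, weak_embedding_B f /\ (forall p, f p \in S).

Definition consec_levels (n k e : nat) : {set {set 'I_n}} :=
  [set A : {set 'I_n} | (k <= #|A|)%N && (#|A| < k + e)%N].

Definition is_d (m : nat) : Prop :=
  weakly_embeds_into [set: {set 'I_m}] /\
  (forall d : nat, weakly_embeds_into [set: {set 'I_d}] -> (m <= d)%N).

(* For every n, no union of e consecutive levels of B_n admits a weak
   embedding of P (the levels k..k+e-1 must be levels of B_n, k+e-1 <= n). *)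
Definition no_embed_consec (e : nat) : Prop :=
  forall n k : nat, (k + e <= n.+1)%N -> ~ weakly_embeds_into (consec_levels n k e).

Definition is_e (m : nat) : Prop :=
  no_embed_consec m /\ (forall e : nat, no_embed_consec e -> (e <= m)%N).

Definition is_chain (C : {set P}) : bool :=
  [forall x in C, forall y in C, (x <= y) || (y <= x)].

Definition height : nat := \max_(C : {set P} | is_chain C) #|C|.

End Defs.

(* Main.v *)
Require Import Defs.
From mathcomp Require Import all_boot all_order.
From Stdlib Require Import Classical.
Set Implicit Arguments. Unset Strict Implicit. Unset Printing Implicit Defensive.
Import Order.TTheory.

Lemma ex_min_P (Q : nat -> Prop) n : Q n -> exists m, Q m /\ forall d, Q d -> (m <= d)%N.
Proof.
elim: n {-2}n (leqnn n) => [|N IH] n Hn Qn.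
  by move: Hn Qn; rewrite leqn0 => /eqP -> Q0; exists 0.
case: (classic (exists d, Q d /\ (d < n)%N)) => [[d [Qd dn]]|H].
  apply: (IH d) => //; rewrite -ltnS; exact: leq_trans dn Hn.
exists n; split => // d Qd; rewrite leqNgt; apply/negP => dn; apply: H; eauto.
Qed.

Lemma ex_max_P (Q : nat -> Prop) B : Q 0 -> (forall e, Q e -> (e <= B)%N) ->
  exists m, Q m /\ forall e, Q e -> (e <= m)%N.
Proof.
elim: B => [|B IH] H0 Hb; first by exists 0; split => // e /Hb.
case: (classic (Q B.+1)) => h; first by exists B.+1.
apply: IH => // e Qe; have := Hb e Qe; rewrite leq_eqVlt; case/orP => [/eqP E|] //.
by rewrite E in Qe.
Qed.

Section S.
Context {disp : Order.disp_t} (P : finPOrderType disp).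

Lemma transfer (T : finType) (f : P -> {set T}) (S : {set T}) :
  injective f -> (forall p q : P, (p <= q)%O -> f p \subset f q) ->
  (forall p, f p \subset S) -> weakly_embeds_into P [set: {set 'I_#|S|}].
Proof.
move=> hi hm hS.
exists (fun p => [set i : 'I_#|S| | @enum_val _ (mem S) i \in f p]).
split; last by move=> p; rewrite inE.
split.
  move=> p q /setP E; apply: hi; apply/setP => x.
  apply/idP/idP => hx.
    have xS := subsetP (hS p) x hx.
    have := E (enum_rank_in xS x); rewrite !inE enum_rankK_in // => <-; done.
  have xS := subsetP (hS q) x hx.
  have := E (enum_rank_in xS x); rewrite !inE enum_rankK_in // => ->; done.
move=> p q le; apply/subsetP=> i; rewrite !inE; exact: (subsetP (hm _ _ le)).
Qed.

Lemma lift a b : (a <= b)%N -> weakly_embeds_into P [set: {set 'I_a}] ->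
  weakly_embeds_into P [set: {set 'I_b}].
Proof.
move=> ab [g [[gi gm] _]].
have wi : injective (widen_ord ab).
  by move=> x y /(congr1 val) /= /val_inj.
exists (fun p => [set widen_ord ab i | i in g p]); split; last by move=> p; rewrite inE.
split.
  by move=> p q /(imset_inj wi) /gi.
by move=> p q le; apply: imsetS; apply: gm.
Qed.

End S.

Theorem mainTheorem3 (disp : Order.disp_t) (P : finPOrderType disp) :
  (0 < #|P|)%N ->
  exists dP eP : nat,
    is_d P dP /\ is_e P eP /\
    (height P - 1 <= eP)%N /\ (eP <= dP)%N /\
    ((exists bot top : P, forall p : P, (bot <= p)%O /\ (p <= top)%O) -> eP = dP).
Proof.
move=> P0.
have [p0 _] : exists p0 : P, True.
  by move/card_gt0P: P0 => [x _]; exists x.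
have Qall : weakly_embeds_into P [set: {set 'I_#|[set: P]|}].
  apply: (@transfer _ P P (fun p => [set q | (q <= p)%O]) [set: P]).
  - move=> p q /setP E; apply/le_anti/andP; split.
      by have := E p; rewrite !inE lexx => <-.
    by have := E q; rewrite !inE lexx => ->.
  - move=> p q le; apply/subsetP => x; rewrite !inE => h; exact: le_trans h le.
  - by move=> p; apply: subsetT.
have [dP [QdP mindP]] := @ex_min_P (fun d => weakly_embeds_into P [set: {set 'I_d}]) _ Qall.
have ebound : forall e, no_embed_consec P e -> (e <= dP)%N.
  move=> e He; rewrite leqNgt; apply/negP => lt.
  apply: (He e.-1 0); first by rewrite add0n prednK //; exact: leq_ltn_trans lt.
  have [g [hg _]] := lift (P:=P) (a:=dP) (b:=e.-1) (ltnSE (leq_trans lt (leqSpred e))) QdP.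
  exists g; split => // p; rewrite inE /=.
  have := max_card (mem (g p)); rewrite card_ord => c.
  by apply: leq_ltn_trans c _; rewrite add0n prednK //; exact: leq_ltn_trans lt.
have ne0 : no_embed_consec P 0.
  move=> n k _ [g [_ hg]]; have := hg p0; rewrite inE addn0 => /andP [a b].
  by have := leq_ltn_trans a b; rewrite ltnn.
have [eP [QeP maxeP]] := ex_max_P ne0 ebound.
exists dP, eP; split; first by split.
split; first by split.
split.
  have [C Cch hC] := @eq_bigmax_cond _ (fun C : {set P} => is_chain C) (fun C => #|C|)
    (ltac:(apply/card_gt0P; exists set0; rewrite /is_chain; apply/forallP => x; by rewrite inE)).
  have -> : height P = #|C| by exact: hC.
  case C0: #|C| => [|c0]; first by [].
  rewrite -C0.
  apply: maxeP => n k _ [f [[fi fm] fS]].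
  have U : uniq [seq #|f c| | c <- enum C].
    rewrite map_inj_in_uniq ?enum_uniq // => x y.
    rewrite !mem_enum => xC yC E.
    have : (x <= y)%O || (y <= x)%O.
      by move/forallP: Cch => /(_ x); rewrite xC /= => /forallP /(_ y); rewrite yC.
    case/orP => le; apply: fi.
      by apply/eqP; rewrite eqEcard fm //= E leqnn.
    by apply/esym/eqP; rewrite eqEcard fm //= E leqnn.
  have := uniq_leq_size (s2 := iota k (#|C| - 1)) U.
  rewrite size_map size_iota -cardE => H.
  have : (#|C| <= #|C| - 1)%N.
    apply: H => x /mapP [c _ ->]; rewrite mem_iota.
    by have := fS c; rewrite inE.
  by rewrite C0 subn1 /= ltnn.
split; first by apply: ebound.
move=> [bot [top Hbt]].
apply/eqP; rewrite eqn_leq ebound //=.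
apply: maxeP => n k _ [f [[fi fm] fS]].
set A := f bot; set B := f top.
have AB : forall p, A \subset f p /\ f p \subset B.
  by move=> p; have [h1 h2] := Hbt p; split; apply: fm.
have := @transfer _ P _ (fun p => f p :\: A) (B :\: A).
case.
- move=> p q E; apply: fi; apply/setP => x.
  have [h1 _] := AB p; have [h2 _] := AB q.
  case xA: (x \in A); first by rewrite (subsetP h1) ?(subsetP h2).
  by move/setP: E => /(_ x); rewrite !inE xA.
- by move=> p q le; apply: setSD; apply: fm.
- by move=> p; apply: setSD; have [_ h] := AB p.
move=> g hg; have := mindP _ (ex_intro _ g hg).
rewrite cardsD (setIidPr (proj1 (AB top))).
have := fS bot; have := fS top; rewrite !inE -/A -/B => /andP [_ b2] /andP [a1 _].
have := subset_leq_card (proj1 (AB top)); rewrite -/A -/B.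
move=> h1 h2; move: h2; rewrite leqNgt => /negP; apply.
by rewrite ltn_subLR //; apply: leq_trans b2 _; rewrite leq_add2r.
Qed.
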